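(* The monoid variety $\mathbf A_0^1\vee\mathbb M_\lambda(ata^+)$ satisfies an identity $\mathbf u\approx\mathbf v$ if and only if all of the following hold: (a) $\mathrm{simp}(\mathbf u)=\mathrm{simp}(\mathbf v)$ and $\mathrm{mul}(\mathbf u)=\mathrm{mul}(\mathbf v)$; (b) for all letters $x,y$ occurring in $\mathbf u$, the first occurrence of $x$ precedes the last occurrence of $y$ in $\mathbf u$ if and only if the first occurrence of $x$ precedes the last occurrence of $y$ in $\mathbf v$; (c) for every $t\in\mathrm{simp}(\mathbf u)$ and $x\in\mathrm{mul}(\mathbf u)$, the occurrence of $t$ precedes the first occurrence of $x$ in $\mathbf u$ iff it does so in $\mathbf v$, and the occurrence of $t$ precedes the second occurrence of $x$ in $\mathbf u$ iff it does so in $\mathbf v$.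
   Context: Words are elements of the free monoid $\mathfrak A^*$ over a countably infinite alphabet; $\mathrm{simp}(\mathbf w)$ and $\mathrm{mul}(\mathbf w)$ are the sets of letters occurring exactly once, respectively at least twice, in $\mathbf w$. $A_0=\langle e,f\mid e^2=e,\ f^2=f,\ fe=0\rangle=\{e,f,ef,0\}$, $A_0^1$ is $A_0$ with an identity adjoined, and $\mathbf A_0^1$ is the monoid variety it generates. Let $\tau_1$ be the congruence on $\mathfrak A^*$ generated by $a=aa$ for letters $a$; $\mathbf u\,\lambda\,\mathbf v$ iff $\mathbf u\,\tau_1\,\mathbf v$, $\mathrm{mul}(\mathbf u)=\mathrm{mul}(\mathbf v)$, and for each multiple letter its first two occurrences are adjacent in $\mathbf u$ iff adjacent in $\mathbf v$. For $\lambda$-classes, $\mathtt v\le\mathtt u$ iff $\mathtt u=\mathtt p\mathtt v\mathtt s$ in $\mathfrak A^*/\lambda$; for a set $\mathtt W$ of classes, $M_\lambda(\mathtt W)$ is the Rees quotient of $\mathfrak A^*/\lambda$ by the ideal of classes not $\le$ any element of $\mathtt W$, and $\mathbb M_\lambda(\mathtt W)$ the variety it generates. $ata^+$ denotes the $\lambda$-class $\{ata^k:k\ge1\}$. $\vee$ is the join of varieties. *)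

(* Defs.v *)
From mathcomp Require Import all_boot.
Set Implicit Arguments. Unset Strict Implicit. Unset Printing Implicit Defensive.

Notation word := (seq nat).

Definition simple_in (x : nat) (w : word) : bool := count_mem x w == 1.
Definition mult_in (x : nat) (w : word) : bool := 1 < count_mem x w.

Definition first_occ (x : nat) (w : word) : nat := index x w.
Definition second_occ (x : nat) (w : word) : nat :=
  (index x w).+1 + index x (drop (index x w).+1 w).
Definition last_occ (x : nat) (w : word) : nat := (size w).-1 - index x (rev w).

(* ---------- monoids presented as setoids (to allow quotients) ---------- *)
Record smonoid := SMonoid {
  carrier :> Type;
  meqv : carrier -> carrier -> Prop;
  mop : carrier -> carrier -> carrier;
  mone : carrier }.

Definition evalw (M : smonoid) (th : nat -> M) (w : word) : M :=
  foldr (fun x acc => mop (th x) acc) (mone M) w.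

Definition satisfies (M : smonoid) (u v : word) : Prop :=
  forall th : nat -> M, meqv (evalw th u) (evalw th v).

(* The join V(M1) \/ V(M2) of the varieties generated by M1, M2: its
   equational theory is the intersection of the theories of M1 and M2. *)
Definition join_satisfies (M1 M2 : smonoid) (u v : word) : Prop :=
  satisfies M1 u v /\ satisfies M2 u v.

(* ---------- A_0^1 = {1, e, f, ef, 0} with e^2=e, f^2=f, fe=0 ---------- *)
Inductive A01 := A1 | Ae | Af | Aef | A0.

Definition A01_mul (x y : A01) : A01 :=
  match x, y with
  | A1, z => z
  | z, A1 => z
  | A0, _ => A0
  | _, A0 => A0
  | Ae, Ae => Ae
  | Ae, Af => Aef
  | Ae, Aef => Aef
  | Af, Ae => A0
  | Af, Af => Af
  | Af, Aef => A0
  | Aef, Ae => A0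
  | Aef, Af => Aef
  | Aef, Aef => A0
  end.

Definition A0_1 : smonoid := @SMonoid A01 eq A01_mul A1.

Inductive tau1 : word -> word -> Prop :=
| tau1_refl w : tau1 w w
| tau1_sym u v : tau1 u v -> tau1 v u
| tau1_trans u v w : tau1 u v -> tau1 v w -> tau1 u w
| tau1_step p a s : tau1 (p ++ a :: s) (p ++ a :: a :: s).

Definition first_two_adj (x : nat) (w : word) : bool :=
  nth x.+1 w (index x w).+1 == x.

Definition lam (u v : word) : Prop :=
  [/\ tau1 u v,
      (forall x, mult_in x u = mult_in x v) &
      (forall x, mult_in x u -> first_two_adj x u = first_two_adj x v)].

Definition lam_le (v u : word) : Prop := exists p s, lam (p ++ v ++ s) u.

(* Rees quotient of A^*/lambda by the ideal of classes not <= any element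
   of W (W given by representatives).  Elements: Some w (the class of w)
   and None (zero); classes in the ideal are identified with zero. *)
Definition in_ideal (W : word -> Prop) (w : word) : Prop :=
  ~ exists r, W r /\ lam_le w r.

Definition Mlam_eqv (W : word -> Prop) (x y : option word) : Prop :=
  let z o := match o with None => True | Some w => in_ideal W w end in
  (z x /\ z y) \/
  (exists a b, x = Some a /\ y = Some b /\ ~ in_ideal W a /\ lam a b).

Definition Mlam_mul (x y : option word) : option word :=
  match x, y with Some a, Some b => Some (a ++ b) | _, _ => None end.

Definition M_lambda (W : word -> Prop) : smonoid :=
  @SMonoid (option word) (Mlam_eqv W) Mlam_mul (Some [::]).

(* the lambda-class a t a^+ with a = letter 0, t = letter 1 *)
Definition W_ata : word -> Prop := fun r => r = [:: 0; 1; 0].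

(* Main.v *)
Require Import Defs.
From mathcomp Require Import all_boot.
From mathcomp Require Import zify.
Set Implicit Arguments. Unset Strict Implicit. Unset Printing Implicit Defensive.

Lemma L1 (x : nat) (w : word) k : k <= size w ->
  (0 < count_mem x (take k w)) = (index x w < k).
Proof.
elim: w k => [|a w IH] [|k] //= Hk.
by case: (eqVneq a x) => [_|Hne] //=; rewrite IH.
Qed.

Lemma L2 (x : nat) (w : word) k : k <= size w ->
  (1 < count_mem x (take k w)) = (second_occ x w < k).
Proof.
rewrite /second_occ.
elim: w k => [|a w IH] [|k] //= Hk.
have [_|Hne] := eqVneq x a => /=.
  by rewrite drop0 add1n ltnS L1.
by rewrite IH.
Qed.

Lemma last_occ_cons (y a : nat) w :
  last_occ y (a :: w) = if y \in w then (last_occ y w).+1 else 0.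
Proof.
rewrite /last_occ rev_cons -cats1 index_cat mem_rev /= size_rev.
case: ifP => Hy.
  have := index_mem y (rev w); rewrite mem_rev Hy size_rev => H.
  by move: H; case: (size w) => [|n] //= H; rewrite subSn.
by rewrite subnDA subnn.
Qed.

Fixpoint bef (x y : nat) (w : word) : bool :=
  match w with
  | [::] => false
  | a :: w' => ((a == x) && (y \in w')) || bef x y w'
  end.

Lemma bef_mem x y w : bef x y w -> (x \in w) && (y \in w).
Proof.
elim: w => //= a w IH /orP [/andP [/eqP -> H]|/IH /andP [H1 H2]].
  by rewrite !in_cons eqxx H orbT.
by rewrite !in_cons H1 H2 !orbT.
Qed.

Lemma befE x y w : (first_occ x w < last_occ y w) = bef x y w.
Proof.
rewrite /first_occ.
elim: w => [|a w IH] //=.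
rewrite last_occ_cons.
case: (a == x) => /=.
  case Hy: (y \in w) => //=; case Hb: (bef x y w) => //.
  by move: (bef_mem Hb); rewrite Hy andbF.
case Hy: (y \in w); first by rewrite ltnS IH.
case Hb: (bef x y w) => //.
by move: (bef_mem Hb); rewrite Hy andbF.
Qed.

Lemma memE (x : nat) w : (x \in w) = (0 < count_mem x w).
Proof. by rewrite -has_pred1 has_count. Qed.

Lemma last_occ_simple t w : simple_in t w -> last_occ t w = index t w.
Proof.
rewrite /simple_in.
elim: w => [|a w IH] //=.
rewrite last_occ_cons.
case: (eqVneq a t) => [Ea|Hne] /= H.
  have -> : (t \in w) = false by rewrite memE; move: H; case: (count_mem t w).
  done.
have Hw : count_mem t w == 1 by [].
by rewrite memE (eqP Hw) IH.
Qed.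

Lemma take_index_succ t y (u : word) : t \in u -> y != t ->
  count_mem y (take (index t u).+1 u) = count_mem y (take (index t u) u).
Proof.
move=> Ht Hne.
rewrite (take_nth t) ?index_mem // nth_index // -cats1 count_cat /=.
by rewrite eq_sym (negbTE Hne) !addn0.
Qed.

Lemma B1 t y (u : word) : t \in u -> y != t ->
  (0 < count_mem y (take (index t u) u)) = ~~ (index t u < index y u).
Proof.
move=> Ht Hne; rewrite -take_index_succ // L1 ?index_mem //.
by rewrite ltnS leqNgt.
Qed.

Lemma B2 t y (u : word) : t \in u -> y != t ->
  (1 < count_mem y (take (index t u) u)) = ~~ (index t u < second_occ y u).
Proof.
move=> Ht Hne; rewrite -take_index_succ // L2 ?index_mem //.
by rewrite ltnS leqNgt.
Qed.

Lemma B0 t (u : word) : count_mem t (take (index t u) u) = 0.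
Proof.
have := L1 t (index_size t u); rewrite ltnn.
by case: (count_mem t _).
Qed.

Definition hase (a : A01) := match a with Ae | Aef => true | _ => false end.
Definition hasf (a : A01) := match a with Af | Aef => true | _ => false end.
Definition isZ (a : A01) := match a with A0 => true | _ => false end.
Definition code (e f : bool) :=
  match e, f with
  | false, false => A1 | true, false => Ae | false, true => Af | true, true => Aef end.

Fixpoint Zr (ps : nat -> A01) (u : word) : bool :=
  match u with
  | [::] => false
  | a :: w => isZ (ps a) || Zr ps w || (hasf (ps a) && has (fun y => hase (ps y)) w)
  end.

Lemma evalA (ps : nat -> A01) u :
  @evalw A0_1 ps u = if Zr ps u then A0 else
     code (has (fun y => hase (ps y)) u) (has (fun y => hasf (ps y)) u).
Proof.
elim: u => [|a w IH] //=.
rewrite IH.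
case: (ps a); case: (Zr ps w); case: (has _ w); by case: (has _ w).
Qed.

Lemma ZrP (ps : nat -> A01) u :
  Zr ps u <-> has (fun y => isZ (ps y)) u \/
              exists x y, [/\ hasf (ps x), hase (ps y) & bef x y u].
Proof.
elim: u => [|a w IH] /=.
  by split=> // [[//|[x [y [_ _]]]]].
split.
  move=> /orP [/orP [H|/IH [H|[x [y [H1 H2 H3]]]]]|/andP [H1 /hasP [y Hy H2]]].
  - by left; rewrite H.
  - by left; rewrite H orbT.
  - by right; exists x, y; rewrite H3 orbT.
  - by right; exists a, y; rewrite eqxx Hy.
move=> [/orP [H|H]|[x [y [H1 H2 /orP [/andP [/eqP Ea Hy]|H3]]]]].
- by rewrite H.
- by rewrite (proj2 IH (or_introl H)) orbT.
- by subst; apply/orP; right; rewrite H1; apply/hasP; exists y.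
- by rewrite (proj2 IH (or_intror (ex_intro _ x (ex_intro _ y (And3 H1 H2 H3))))) orbT.
Qed.

Lemma code_neq0 e f : code e f <> A0.
Proof. by case: e; case: f. Qed.

Lemma ZrE u v : satisfies A0_1 u v -> forall ps, Zr ps u = Zr ps v.
Proof.
move=> H ps; have := H ps; rewrite /= !evalA.
case: (Zr ps u); case: (Zr ps v) => // E; first [case: (code_neq0 E) | case: (code_neq0 (esym E))].
Qed.



Lemma befxx x w : bef x x w = (1 < count_mem x w).
Proof.
elim: w => [|a w IH] //=.
case: (eqVneq a x) => [Ea|Hne] /=.
  by rewrite memE IH add1n ltnS; case: (count_mem x w) => [|[|]].
by rewrite IH.
Qed.

Definition psb (x y : nat) : nat -> A01 := fun z =>
  if z == x then (if x == y then Aef else Af) else if z == y then Ae else A1.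

Lemma Zr_psb x y u : Zr (psb x y) u = bef x y u.
Proof.
apply/idP/idP.
  move/ZrP => [/hasP [z _]|[a [b [H1 H2 H3]]]].
    by rewrite /psb; case: (z == x); case: (x == y); case: (z == y).
  have Ea : a = x.
    by move: H1; rewrite /psb; case: (eqVneq a x) => // _; case: (a == y).
  have Eb : b = y.
    apply/eqP; move: H2; rewrite /psb.
    case: (eqVneq b x) => [Ebx|_]; last by case: (b == y).
    by rewrite Ebx; case: (x == y).
  by subst.
move=> H; apply/ZrP; right; exists x, y; split => //.
  by rewrite /psb eqxx; case: (x == y).
by rewrite /psb; case: (eqVneq y x) => //= _; rewrite eqxx.
Qed.

Definition psc (x : nat) : nat -> A01 := fun z => if z == x then Ae else A1.

Lemma eval_psc x u : @evalw A0_1 (psc x) u = if x \in u then Ae else A1.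
Proof.
rewrite evalA.
have -> : Zr (psc x) u = false.
  apply/negbTE/negP => /ZrP [/hasP [z _]|[a [b [H1 _ _]]]].
    by rewrite /psc; case: (z == x).
  by move: H1; rewrite /psc; case: (a == x).
have -> : has (fun y => hase (psc x y)) u = (x \in u).
  rewrite -has_pred1; apply: eq_has => z; rewrite /psc /=.
  by case: (z == x).
have -> : has (fun y => hasf (psc x y)) u = false.
  by apply/negbTE/hasPn => z _; rewrite /psc; case: (z == x).
by case: (x \in u).
Qed.

Lemma A01_suff u v : u =i v ->
  (forall x y, x \in u -> y \in u -> bef x y u = bef x y v) ->
  satisfies A0_1 u v.
Proof.
move=> Hc Hb ps; rewrite /= !evalA.
rewrite !(eq_has_r Hc).
have -> : Zr ps u = Zr ps v; last by [].
apply/idP/idP => /ZrP [H|[x [y [H1 H2 H3]]]]; apply/ZrP.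
- by left; rewrite -(eq_has_r Hc).
- right; exists x, y; split => //.
  by move/andP: (bef_mem H3) => [Hx Hy]; rewrite -Hb.
- by left; rewrite (eq_has_r Hc).
- right; exists x, y; split => //.
  by move/andP: (bef_mem H3) => [Hx Hy]; rewrite Hb // Hc.
Qed.

Lemma evalM (th : nat -> option word) u :
  @evalw (M_lambda W_ata) th u =
  if all (fun y => isSome (th y)) u
  then Some (flatten (map (fun y => odflt [::] (th y)) u)) else None.
Proof.
elim: u => [|a w IH] //=.
rewrite IH; case: (th a) => [wa|] //=.
by case: (all _ w).
Qed.

Lemma tau1_mem u v : tau1 u v -> u =i v.
Proof.
elim=> {u v} [w|u v _ H|u v w _ H1 _ H2|p a s] x //.
- by rewrite H1 H2.
- by rewrite !mem_cat !in_cons; case: (x == a).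
Qed.

Lemma tau1_head u v : tau1 u v -> head 5 u = head 5 v.
Proof.
elim=> {u v} [w|u v _ H|u v w _ H1 _ H2|p a s] //.
- by rewrite H1 H2.
- by case: p.
Qed.

Lemma lam_fam (X : nat -> word) :
  (forall k, tau1 (X k) (X k.+1)) ->
  (forall k x, mult_in x (X k) = mult_in x (X 0)) ->
  (forall k x, mult_in x (X 0) -> first_two_adj x (X k) = first_two_adj x (X 0)) ->
  forall k j, lam (X k) (X j).
Proof.
move=> H1 H2 H3.
have T0 k : tau1 (X 0) (X k).
  elim: k => [|k IH]; first exact: tau1_refl.
  exact: tau1_trans IH (H1 k).
move=> k j; split.
- exact: tau1_trans (tau1_sym (T0 k)) (T0 j).
- by move=> x; rewrite H2 (H2 j).
- by move=> x; rewrite H2 => Hx; rewrite H3 // (H3 j).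
Qed.

Definition XA k : word := nseq k.+2 0.
Definition XB k : word := 1 :: nseq k.+2 0.
Definition XC k : word := 0 :: 1 :: nseq k.+1 0.

Lemma lamA k j : lam (XA k) (XA j).
Proof.
apply: lam_fam => [k'|k' x|k' [|x] Hm] //=.
  exact: (tau1_step [::] 0 (nseq k'.+1 0)).
by rewrite /mult_in /XA !count_nseq; case: x.
Qed.

Lemma lamB k j : lam (XB k) (XB j).
Proof.
apply: lam_fam => [k'|k' x|k' [|x] Hm] //=.
- exact: (tau1_step [:: 1] 0 (nseq k'.+1 0)).
- by rewrite /mult_in /XB /= !count_nseq; case: x => [|[|x]].
- by move: Hm; rewrite /mult_in /XB /= !addn0; case: eqP.
Qed.

Lemma lamC k j : lam (XC k) (XC j).
Proof.
apply: lam_fam => [k'|k' x|k' [|x] Hm] //=.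
- exact: (tau1_step [:: 0; 1] 0 (nseq k' 0)).
- by rewrite /mult_in /XC /= !count_nseq; case: x => [|[|x]].
- by move: Hm; rewrite /mult_in /XC /= !addn0 add0n; case: eqP.
Qed.

Definition bad (a : nat) := 1 < a.
Definition pre0 (w : word) := count_mem 0 (take (index 1 w) w).
Definition nz (w : word) : bool := (count bad w == 0) &&
  ((count_mem 1 w == 0) || ((count_mem 1 w == 1) && (pre0 w <= 1))).
Definition F (p q : nat) : word := nseq p 0 ++ 1 :: nseq q 0.

Lemma decomp (x : nat) w : x \in w -> w = take (index x w) w ++ x :: drop (index x w).+1 w.
Proof.
move=> Hx; rewrite -{1}(cat_take_drop (index x w) w) (drop_nth x) ?index_mem //.
by rewrite nth_index.
Qed.

Lemma allzero w : count bad w = 0 -> count_mem 1 w = 0 -> w = nseq (size w) 0.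
Proof.
move=> H1 H2; apply/all_pred1P/allP => a Ha.
case: a Ha => [|[|a]] Ha //.
  by move: Ha; rewrite memE H2.
have : has bad w by apply/hasP; exists a.+2.
by rewrite has_count H1.
Qed.

Lemma shape1 w : count bad w = 0 -> count_mem 1 w = 1 -> exists p q, w = F p q.
Proof.
move=> H1 H2.
have Hm : 1 \in w by rewrite memE H2.
move: H1 H2; rewrite (decomp Hm) !count_cat /=.
set A := take _ w; set B := drop _ w => H1 H2.
exists (size A), (size B); rewrite /F.
clearbody A B.
move/eqP: H1; rewrite addn_eq0 add0n => /andP [/eqP HA1 /eqP HB1].
move/eqP: H2; rewrite add1n addnS eqSS addn_eq0 => /andP [/eqP HA2 /eqP HB2].
by rewrite {1}(allzero HA1 HA2) {1}(allzero HB1 HB2).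
Qed.

Lemma Fbad p q : count bad (F p q) = 0.
Proof. by rewrite /F count_cat /= !count_nseq. Qed.

Lemma F1 p q : count_mem 1 (F p q) = 1.
Proof. by rewrite /F count_cat /= !count_nseq. Qed.

Lemma F0 p q : count_mem 0 (F p q) = p + q.
Proof. by rewrite /F count_cat /= !count_nseq /= !mul1n add0n. Qed.

Lemma Fpre p q : pre0 (F p q) = p.
Proof.
rewrite /pre0 /F index_cat mem_nseq andbF size_nseq /= addn0.
by rewrite take_size_cat ?size_nseq // count_nseq mul1n.
Qed.

Lemma nzF p q : nz (F p q) = (p <= 1).
Proof. by rewrite /nz Fbad F1 Fpre. Qed.

Lemma nseq_rcons n : nseq n 0 ++ [:: 0] = nseq n.+1 0.
Proof. by elim: n => //= n ->. Qed.

Lemma nz_not_ideal w : nz w -> ~ in_ideal W_ata w.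
Proof.
move=> H Hi; apply: Hi; exists [:: 0; 1; 0]; split => //.
move: H; rewrite /nz => /andP [/eqP Hb /orP [/eqP H1|/andP [/eqP H1 Hp]]].
  rewrite (allzero Hb H1); exists [:: 0; 1], [:: 0].
  by rewrite /= nseq_rcons; apply: (lamC _ 0).
have [p [q Hw]] := shape1 Hb H1; subst w; rewrite Fpre in Hp; clear H1 Hb.
case: p Hp => [|[|p]] // _.
  by exists [:: 0], [:: 0]; rewrite /F /= nseq_rcons; apply: (lamC _ 0).
by exists [::], [:: 0]; rewrite /F /= nseq_rcons; apply: (lamC _ 0).
Qed.

Lemma nz_ideal w : ~~ nz w -> in_ideal W_ata w.
Proof.
move=> H [r [-> [p [s [T M A]]]]].
have Hc := tau1_mem T.
have M1 : count_mem 1 (p ++ w ++ s) <= 1.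
  by have := M 1; rewrite /mult_in /= => E; rewrite leqNgt E.
have Hbad z : z \in p ++ w ++ s -> ~~ bad z.
  by rewrite Hc; case: z => [|[|z]].
have Hb : count bad w = 0.
  apply/eqP; rewrite -leqn0 leqNgt -has_count; apply/hasP => [[a Ha Hba]].
  by move: (Hbad a); rewrite !mem_cat Ha orbT Hba => /(_ isT).
move: M1; rewrite !count_cat => M1.
move: H; rewrite /nz Hb eqxx /=.
case E0: (count_mem 1 w == 0) => //=.
have E1 : count_mem 1 w = 1.
  by move/eqP: E0 => E0; move: M1; case: (count_mem 1 w) E0 => [|[|n]] //; lia.
rewrite E1 eqxx /= -ltnNge => Hp.
have [pp [q Hw]] := shape1 Hb E1; rewrite Hw Fpre in Hp.
have Hp1 : count_mem 1 p = 0 by lia.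
have Hpb : count bad p = 0.
  apply/eqP; rewrite -leqn0 leqNgt -has_count; apply/hasP => [[a Ha Hba]].
  by move: (Hbad a); rewrite !mem_cat Ha Hba => /(_ isT).
have Ep := allzero Hpb Hp1.
case: pp Hp Hw => [|[|pp]] // _ Hw.
have EP : p ++ w ++ s = 0 :: 0 :: (nseq (size p + pp) 0 ++ 1 :: nseq q 0 ++ s).
  rewrite Hw {1}Ep /F -!catA catA -nseqD !addnS /=.
  done.
have Hm0 : mult_in 0 (p ++ w ++ s) by rewrite EP /mult_in /= add1n addSn ltnS.
by have := A 0 Hm0; rewrite EP.
Qed.

Lemma lam_refl w : lam w w.
Proof. by split => //; exact: tau1_refl. Qed.

Lemma nz_lam w w' : nz w -> nz w' ->
  minn (count_mem 0 w) 2 = minn (count_mem 0 w') 2 ->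
  count_mem 1 w = count_mem 1 w' ->
  (count_mem 1 w = 1 -> pre0 w = pre0 w') -> lam w w'.
Proof.
move=> /andP [/eqP Hb /orP [/eqP H1|/andP [/eqP H1 Hp]]] /andP [/eqP Hb' _] Hc E1 Ep.
  have H1' : count_mem 1 w' = 0 by rewrite -E1.
  rewrite (allzero Hb H1) (allzero Hb' H1') in Hc *.
  move: Hc; rewrite !count_nseq !mul1n.
  move: (size w) (size w') => n n' Hc.
  have [->|Hne] := eqVneq n n'; first exact: lam_refl.
  have [k ->] : exists k, n = k.+2 by exists n.-2; lia.
  have [j ->] : exists j, n' = j.+2 by exists n'.-2; lia.
  exact: lamA.
have H1' : count_mem 1 w' = 1 by rewrite -E1.
have [p [q Hw]] := shape1 Hb H1.
have [p' [q' Hw']] := shape1 Hb' H1'.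
have := Ep H1; rewrite Hw Hw' !Fpre => Epp; subst p'.
move: Hc Hp; rewrite Hw Hw' !F0 Fpre => Hc Hp.
subst w w'.
have [->|Hne] := eqVneq q q'; first exact: lam_refl.
clear H1 H1' Hb Hb' E1 Ep. case: p Hp Hc => [|[|p]] // _ Hc.
  have [k ->] : exists k, q = k.+2 by exists q.-2; lia.
  have [j ->] : exists j, q' = j.+2 by exists q'.-2; lia.
  exact: lamB.
have [k ->] : exists k, q = k.+1 by exists q.-1; lia.
have [j ->] : exists j, q' = j.+1 by exists q'.-1; lia.
exact: lamC.
Qed.

Definition cap n := minn n 2.

Lemma cap_pos a b : cap a = cap b -> (0 < a) = (0 < b).
Proof. by rewrite /cap => H; apply/idP/idP => ?; lia. Qed.
Lemma cap_eq1 a b : cap a = cap b -> (a == 1) = (b == 1).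
Proof. by rewrite /cap => H; apply/eqP/eqP => ?; lia. Qed.
Lemma cap_eq0 a b : cap a = cap b -> (a == 0) = (b == 0).
Proof. by rewrite /cap => H; apply/eqP/eqP => ?; lia. Qed.
Lemma cap_le1 a b : cap a = cap b -> (a <= 1) = (b <= 1).
Proof. by rewrite /cap => H; apply/idP/idP => ?; lia. Qed.
Lemma capE n : cap n = (0 < n) + (1 < n).
Proof. by case: n => [|[|n]]. Qed.
Lemma capE2 n : cap n = (n == 1) + (1 < n).*2.
Proof. by case: n => [|[|n]]. Qed.
Lemma capD a b : cap (a + b) = cap (cap a + cap b).
Proof. rewrite /cap; lia. Qed.
Lemma capM a f : cap (a * f) = cap (cap a * f).
Proof.
have h n : 2 <= n -> minn n 2 = 2 by move/minn_idPr.
rewrite /cap; case: a => [|[|a]]; case: f => [|f]; rewrite ?muln0 ?mul0n ?mul1n //.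
rewrite (h a.+2) // !h //.
  by apply: leq_trans (leq_pmulr _ _).
by apply: (@leq_trans a.+2) => //; apply: leq_pmulr.
Qed.

Lemma sum_undup (F : nat -> nat) (u : seq nat) :
  \sum_(y <- u) F y = \sum_(y <- undup u) count_mem y u * F y.
Proof.
rewrite -big_undup_iterop_count; apply: eq_bigr => y _.
by rewrite Monoid.iteropE iter_addn_0 mulnC.
Qed.

Lemma capsum_aux (s : seq nat) (a F : nat -> nat) :
  cap (\sum_(y <- s) a y * F y) = cap (\sum_(y <- s) cap (a y) * F y).
Proof.
elim: s => [|y s IH]; first by rewrite !big_nil.
by rewrite !big_cons capD IH capM [RHS]capD.
Qed.

Lemma capsum (F : nat -> nat) (u v : seq nat) :
  (forall y, cap (count_mem y u) = cap (count_mem y v)) ->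
  cap (\sum_(y <- u) F y) = cap (\sum_(y <- v) F y).
Proof.
move=> H; rewrite (sum_undup F u) (sum_undup F v) capsum_aux [RHS]capsum_aux.
rewrite (perm_big (undup v)); first by apply: congr1; apply: eq_bigr => y _; rewrite H.
apply: uniq_perm; rewrite ?undup_uniq // => y.
by rewrite !mem_undup (memE y u) (memE y v) (cap_pos (H y)).
Qed.

Lemma count_W (P : pred nat) (g : nat -> word) w :
  count P (flatten (map g w)) = \sum_(y <- w) count P (g y).
Proof. by rewrite count_flatten sumnE !big_map. Qed.

Lemma count_take_le (y : nat) k w : count_mem y (take k w) <= count_mem y w.
Proof. by rewrite -[in X in _ <= X](cat_take_drop k w) count_cat leq_addr. Qed.

Lemma content u v :
  (forall x, simple_in x u = simple_in x v) ->
  (forall x, mult_in x u = mult_in x v) -> u =i v.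
Proof.
move=> Hs Hm x; have := Hs x; have := Hm x; rewrite !memE /simple_in /mult_in.
case: (count_mem x u) => [|[|a]]; case: (count_mem x v) => [|[|b]] //.
Qed.

Definition condA (u v : word) := (forall x, simple_in x u = simple_in x v) /\
      (forall x, mult_in x u = mult_in x v).
Definition condB (u v : word) := forall x y, x \in u -> y \in u ->
         (first_occ x u < last_occ y u) = (first_occ x v < last_occ y v).
Definition condC (u v : word) := forall t x, simple_in t u -> mult_in x u ->
         (first_occ t u < first_occ x u) = (first_occ t v < first_occ x v) /\
         (first_occ t u < second_occ x u) = (first_occ t v < second_occ x v).

Lemma simple_mem t w : simple_in t w -> t \in w.
Proof. by rewrite /simple_in memE => /eqP ->. Qed.

Lemma count_simple_take y t w : simple_in y w ->
  count_mem y (take (index t w) w) = (index y w < index t w).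
Proof.
move=> Hy; have := L1 y (index_size t w).
have := count_take_le y (index t w) w; move: Hy; rewrite /simple_in => /eqP ->.
case: (index y w < index t w); case: (count_mem y _) => [|[|n]] //.
Qed.

Lemma before_cap u v t : condA u v -> condB u v -> condC u v -> simple_in t u ->
  forall y, cap (count_mem y (take (index t u) u)) = cap (count_mem y (take (index t v) v)).
Proof.
move=> [Hs Hm] Hb Hc Ht y.
have Htv : simple_in t v by rewrite -Hs.
have Hcu := content Hs Hm.
have tu := simple_mem Ht; have tv := simple_mem Htv.
case: (eqVneq y t) => [->|Hyt]; first by rewrite !B0.
case Hyu: (y \in u); last first.
  have Hyv : (y \in v) = false by rewrite -Hcu.
  have Z w k : (y \in w) = false -> count_mem y (take k w) = 0.
    move=> Hw; have := count_take_le y k w; move: Hw; rewrite memE.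
    by case: (count_mem y w); case: (count_mem y (take k w)).
  by rewrite !Z.
have : (simple_in y u) || (mult_in y u).
  by move: Hyu; rewrite memE /simple_in /mult_in; case: (count_mem y u) => [|[|]].
case/orP => Hy.
  have Hyv : simple_in y v by rewrite -Hs.
  have := Hb y t Hyu tu; rewrite /first_occ !last_occ_simple // => E.
  by rewrite !count_simple_take // E.
have [E1 E2] := Hc t y Ht Hy.
rewrite !capE !B1 // !B2 //.
by rewrite /first_occ in E1 E2; rewrite E1 E2.
Qed.

Lemma split_sum (F : nat -> nat) (t : nat) (w : word) : t \in w ->
  \sum_(y <- w) F y =
  \sum_(y <- take (index t w) w) F y + F t + \sum_(y <- drop (index t w).+1 w) F y.
Proof. by move=> H; rewrite {1}(decomp H) big_cat big_cons; exact: addnA. Qed.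

Lemma single_le (F : nat -> nat) (t : nat) (s : word) : t \in s -> F t <= \sum_(y <- s) F y.
Proof. by move=> H; rewrite (big_rem t) //= leq_addr. Qed.

Lemma pre0_cat A B C : count_mem 1 A = 0 -> 1 \in B ->
  pre0 (A ++ B ++ C) = count_mem 0 A + pre0 B.
Proof.
move=> HA HB; rewrite /pre0.
have nA : (1 \in A) = false by rewrite memE HA.
rewrite index_cat nA index_cat HB.
rewrite take_cat ltnNge leq_addr /= addKn count_cat.
by rewrite take_cat index_mem HB.
Qed.

Lemma pre_cap u v (g : nat -> word) : condA u v -> condB u v -> condC u v ->
  count_mem 1 (flatten (map g u)) = 1 -> count_mem 1 (flatten (map g v)) = 1 ->
  cap (pre0 (flatten (map g u))) = cap (pre0 (flatten (map g v))).
Proof.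
move=> HA Hb Hc H1u H1v.
have [Hs Hm] := HA; have Hcu := content Hs Hm.
rewrite count_W in H1u; rewrite count_W in H1v.
have [t tu Ft] : exists2 t, t \in u & 0 < count_mem 1 (g t).
  apply/hasP; apply/negPn/negP => /hasPn H.
  move: H1u; rewrite big_seq big1 // => y /H.
  by rewrite lt0n negbK => /eqP.
have tv : t \in v by rewrite -Hcu.
rewrite (split_sum _ tu) in H1u; rewrite (split_sum _ tv) in H1v.
have Hft : count_mem 1 (g t) = 1.
  move: Ft H1u; set c := count_mem 1 (g t); set a := \sum_(y <- _) _; set b := \sum_(y <- _) _; lia.
rewrite Hft in H1u H1v.
move: H1u H1v.
set a := \sum_(y <- take _ u) _; set b := \sum_(y <- drop _ u) _.
set a' := \sum_(y <- take _ v) _; set b' := \sum_(y <- drop _ v) _.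
move=> H1u H1v.
have Htu0 : a = 0 by lia.
have Htv0 : a' = 0 by lia.
have Hb0 : b = 0 by lia.
have Hdu : (t \in drop (index t u).+1 u) = false.
  apply/negP => Hd; have := single_le (fun y => count_mem 1 (g y)) Hd.
  by rewrite -/b Hb0 /= Hft.
have Hst : simple_in t u.
  rewrite /simple_in {1}(decomp tu) count_cat /= eqxx B0.
  by move: Hdu; rewrite memE; case: (count_mem t _).
have g1 : 1 \in g t by rewrite memE Hft.
rewrite {1}(decomp tu) {1}(decomp tv) !map_cat !flatten_cat /=.
rewrite !pre0_cat // ?count_W //.
rewrite capD [RHS]capD.
by rewrite (capsum _ (before_cap HA Hb Hc Hst)).
Qed.

Lemma suffM u v (g : nat -> word) : condA u v -> condB u v -> condC u v ->
  nz (flatten (map g u)) = nz (flatten (map g v)) /\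
  (nz (flatten (map g u)) -> lam (flatten (map g u)) (flatten (map g v))).
Proof.
move=> HA Hb Hc.
have [Hs Hm] := HA.
have H0 y : cap (count_mem y u) = cap (count_mem y v).
  by rewrite !capE2; have := Hs y; have := Hm y; rewrite /simple_in /mult_in => -> ->.
have capN P : cap (count P (flatten (map g u))) = cap (count P (flatten (map g v))).
  by rewrite !count_W; apply: capsum.
have hb := cap_eq0 (capN bad).
have h10 := cap_eq0 (capN (pred1 1)).
have h11 := cap_eq1 (capN (pred1 1)).
have Hpre : count_mem 1 (flatten (map g u)) = 1 ->
    cap (pre0 (flatten (map g u))) = cap (pre0 (flatten (map g v))).
  move=> E; apply: pre_cap => //; apply/eqP; rewrite -h11; exact/eqP.
have Hnz : nz (flatten (map g u)) = nz (flatten (map g v)).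
  rewrite /nz hb h10 -h11.
  case E: (count_mem 1 (flatten (map g u)) == 1); last by rewrite !andFb.
  by rewrite !andTb (cap_le1 (Hpre (eqP E))).
split => // Hn.
have Hn' := Hn; rewrite Hnz in Hn'.
apply: nz_lam => //.
- exact: capN (pred1 0).
- move: Hn => /andP [_ /orP [/eqP E|/andP [/eqP E _]]].
    by rewrite E; apply/esym/eqP; rewrite -h10 E.
  by rewrite E; apply/esym/eqP; rewrite -h11 E.
- move=> E; have := Hpre E.
  move: Hn Hn' => /andP [_ /orP [/eqP E'|/andP [_ Hp]]]; first by rewrite E in E'.
  move=> /andP [_ /orP [/eqP E''|/andP [_ Hp']]].
    by move: h10; rewrite E E''.
  rewrite /cap; lia.
Qed.

Lemma headF c d : head 5 (F c d) = if c is 0 then 1 else 0.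
Proof. by case: c. Qed.

Lemma adjF c d : 2 <= c + d -> first_two_adj 0 (F c d) = (c != 1).
Proof. by case: c => [|[|c]] //; case: d => [|[|d]]. Qed.

Lemma formM c d c' d' : 2 <= c + d -> 2 <= c' + d' ->
  Mlam_eqv W_ata (Some (F c d)) (Some (F c' d')) ->
  (c == 0) = (c' == 0) /\ (c <= 1) = (c' <= 1).
Proof.
move=> Hcd Hcd'; rewrite /Mlam_eqv /= => -[[Hi Hi']|[a [b [Ea [Eb [Hni Hl]]]]]].
  have Hc : 1 < c.
    rewrite ltnNge; apply/negP => H; apply: (nz_not_ideal _ Hi); by rewrite nzF.
  have Hc' : 1 < c'.
    rewrite ltnNge; apply/negP => H; apply: (nz_not_ideal _ Hi'); by rewrite nzF.
  by case: c c' Hc Hc' {Hcd Hcd' Hi Hi'} => [|[|c]] [|[|c']].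
case: Ea => Ea; case: Eb => Eb; subst a b.
have Hc : c <= 1.
  apply/negPn/negP => H; apply: Hni; apply: nz_ideal; by rewrite nzF.
have [T M A] := Hl.
have Hh := tau1_head T; rewrite !headF in Hh.
have Hm0 : mult_in 0 (F c d) by rewrite /mult_in F0.
have := A 0 Hm0; rewrite !adjF //.
by case: c c' Hc Hh {Hcd Hcd' Hni Hl T M A Hm0} => [|[|c]] [|[|c']].
Qed.

Lemma flat_noT (t x : nat) (w : word) : t \notin w ->
  flatten (map (fun y => if y == t then [:: 1] else if y == x then [:: 0] else [::]) w)
  = nseq (count_mem x w) 0.
Proof.
elim: w => [|a w IH] //=; rewrite in_cons negb_or => /andP [Hat Hw].
rewrite eq_sym (negbTE Hat) IH //.
by case: (a == x).
Qed.

Lemma formW (t x : nat) (w : word) : simple_in t w -> x != t ->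
  let c := count_mem x (take (index t w) w) in
  let d := count_mem x (drop (index t w).+1 w) in
  flatten (map (fun y => if y == t then [:: 1] else if y == x then [:: 0] else [::]) w)
    = F c d /\ count_mem x w = c + d.
Proof.
move=> Ht Hxt c d.
have tw := simple_mem Ht.
have Hcnt := Ht; rewrite /simple_in {1}(decomp tw) count_cat /= eqxx B0 in Hcnt.
have Hd : t \notin drop (index t w).+1 w.
  by rewrite memE; move: Hcnt; case: (count_mem t _).
have Htk : t \notin take (index t w) w by rewrite memE B0.
split.
  rewrite {1}(decomp tw) map_cat flatten_cat /= eqxx !flat_noT //.
rewrite {1}(decomp tw) count_cat /= eq_sym (negbTE Hxt).
by [].
Qed.

Lemma idxC (t x : nat) (w : word) : t \in w -> x != t ->
  (index t w < index x w) = (count_mem x (take (index t w) w) == 0) /\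
  (index t w < second_occ x w) = (count_mem x (take (index t w) w) <= 1).
Proof.
move=> tw Hxt; split.
  by rewrite -[LHS]negbK -B1 // lt0n negbK.
by rewrite -[LHS]negbK -(B2 tw Hxt) -leqNgt.
Qed.

Lemma necC u v : satisfies (M_lambda W_ata) u v -> condA u v -> condC u v.
Proof.
move=> HM [Hs Hm] t x Ht Hx.
have Htv : simple_in t v by rewrite -Hs.
have Hxv : mult_in x v by rewrite -Hm.
have Hxt : x != t.
  by apply/negP => /eqP E; move: Ht Hx; rewrite E /simple_in /mult_in => /eqP ->.
have := HM (fun y => Some (if y == t then [:: 1] else if y == x then [:: 0] else [::])).
rewrite !evalM.
have Hall w : all (fun y => isSome (Some (if y == t then [:: 1] else if y == x then [:: 0] else [::]))) w.
  by apply/allP.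
rewrite !Hall /=.
have [Eu Cu] := formW Ht Hxt.
have [Ev Cv] := formW Htv Hxt.
rewrite Eu Ev => /formM.
move: Hx Hxv; rewrite /mult_in Cu Cv => Hx Hxv /(_ Hx Hxv) [E1 E2].
have [I1 I2] := idxC (simple_mem Ht) Hxt.
have [J1 J2] := idxC (simple_mem Htv) Hxt.
by rewrite /first_occ I1 I2 J1 J2 E1 E2.
Qed.

Lemma simpleE x w : simple_in x w = (x \in w) && ~~ mult_in x w.
Proof. by rewrite /simple_in /mult_in memE; case: (count_mem x w) => [|[|n]]. Qed.

Unset Implicit Arguments.
Set Strict Implicit.

Theorem lemma6p2 (u v : word) :
  join_satisfies A0_1 (M_lambda W_ata) u v <->
  [/\ (forall x, simple_in x u = simple_in x v) /\
      (forall x, mult_in x u = mult_in x v),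
      (forall x y, x \in u -> y \in u ->
         (first_occ x u < last_occ y u) = (first_occ x v < last_occ y v)) &
      (forall t x, simple_in t u -> mult_in x u ->
         (first_occ t u < first_occ x u) = (first_occ t v < first_occ x v) /\
         (first_occ t u < second_occ x u) = (first_occ t v < second_occ x v))].
Proof.
split.
  move=> [HA HM].
  have Hcont x : (x \in u) = (x \in v).
    have := HA (psc x); rewrite !eval_psc.
    by case: (x \in u); case: (x \in v).
  have Hbef x y : bef x y u = bef x y v by rewrite -!Zr_psb; apply: ZrE.
  have Hm x : mult_in x u = mult_in x v by rewrite /mult_in -!befxx.
  have Hs x : simple_in x u = simple_in x v by rewrite !simpleE Hcont Hm.
  have cA : condA u v by [].
  split => //.
    by move=> x y _ _; rewrite !befE.
  exact: (necC HM cA).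
move=> [HA Hb Hc].
have [Hs Hm] := HA.
have Hcu := content Hs Hm.
split.
  apply: A01_suff => // x y Hx Hy; rewrite -!befE; exact: Hb.
move=> th; rewrite !evalM -(eq_all_r Hcu).
rewrite /Mlam_eqv /=.
case: (all _ u); last by left.
have [E L] := suffM (fun y => odflt [::] (th y)) HA Hb Hc.
case Hn: (nz (flatten (map (fun y => odflt [::] (th y)) u))).
  right; do 2 eexists; split; [reflexivity| split; [reflexivity| split; [exact: nz_not_ideal|exact: L]]].
by left; split; apply: nz_ideal; rewrite -?E Hn.
Qed.
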